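(* The class of data languages accepted by SAFA is closed under union: for any SAFA $M_1$ and $M_2$ over the same $\Sigma\times D$, there is a SAFA $M_3$ with $L(M_3)=L(M_1)\cup L(M_2)$.
   Context: $D$ is a fixed countably infinite set of data values; for a finite alphabet $\Sigma$, data words are elements of $(\Sigma\times D)^*$. A set augmented finite automaton (SAFA) is a tuple $M=(Q,\Sigma\times D,q_0,F,H,\delta)$: $Q$ finite set of states, $q_0\in Q$ initial, $F\subseteq Q$ final, $H=\{h_1,\dots,h_m\}$ a finite collection of (names of) sets of data values, $\delta\subseteq Q\times\Sigma\times C\times OP\times Q$ with $C=\{p(h_i),\,!p(h_i): h_i\in H\}$, $OP=\{-\}\cup\{\mathsf{ins}(h_i):h_i\in H\}$. Configurations are $(q,\langle S_1,\dots,S_m\rangle)$ with $S_i\subseteq D$ finite; initially state $q_0$ and all sets empty. On reading $(a,d)$, a transition $(q,a,\alpha,op,q')$ from the current state may be taken if $\alpha=p(h_i)$ and $d\in S_i$, or $\alpha=\,!p(h_i)$ and $d\notin S_i$; then the state becomes $q'$ and if $op=\mathsf{ins}(h_j)$ the value $d$ is added to $S_j$ ($op=-$ changes nothing). A word is accepted if some run reads it entirely and ends in $F$; $L(M)$ is the set of accepted words. *)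

(* Defs.v *)
From mathcomp Require Import all_boot.
From Stdlib Require Lists.List.
Set Implicit Arguments. Unset Strict Implicit. Unset Printing Implicit Defensive.

Inductive cond (m : nat) := CIn of 'I_m | CNotIn of 'I_m.
Inductive op (m : nat) := NoOp | Ins of 'I_m.

Record SAFA (Sigma D : Type) := {
  state : finType;
  nsets : nat;
  q0 : state;
  final : pred state;
  delta : seq (state * Sigma * cond nsets * op nsets * state)
}.

Section Sem.
Variables (Sigma : eqType) (D : eqType).
Variable M : SAFA Sigma D.

(* configurations: state and a tuple of finite sets of data values (as lists) *)
Definition config := (state M * ('I_(nsets M) -> seq D))%type.

Definition holds (c : cond (nsets M)) (S : 'I_(nsets M) -> seq D) (d : D) : bool :=
  match c with CIn i => d \in S i | CNotIn i => d \notin S i end.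

Definition apply_op (o : op (nsets M)) (S : 'I_(nsets M) -> seq D) (d : D)
  : 'I_(nsets M) -> seq D :=
  match o with NoOp => S | Ins j => fun i => if i == j then d :: S i else S i end.

Definition step (c : config) (ad : Sigma * D) (c' : config) : Prop :=
  exists q' al o, Stdlib.Lists.List.In (c.1, ad.1, al, o, q') (delta M) /\
    holds al c.2 ad.2 /\ c'.1 = q' /\ c'.2 = apply_op o c.2 ad.2.

Fixpoint acc_from (c : config) (w : seq (Sigma * D)) : Prop :=
  match w with
  | [::] => @final Sigma D M c.1
  | ad :: w' => exists c', step c ad c' /\ acc_from c' w'
  end.

Definition init_config : config := (q0 M, fun _ => [::]).

Definition lang (w : seq (Sigma * D)) : Prop := acc_from init_config w.
End Sem.

Definition countably_infinite (D : countType) : Prop :=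
  exists f : nat -> D, injective f.

(* Main.v *)
Require Import Defs.
From mathcomp Require Import all_boot.
From Stdlib Require List.

Section U.
Variables (Sigma : finType) (D : countType) (M1 M2 : SAFA Sigma D).
Local Notation m1 := (nsets M1).
Local Notation m2 := (nsets M2).

Definition cl (c : cond m1) : cond (m1 + m2) :=
  match c with CIn i => CIn (lshift m2 i) | CNotIn i => CNotIn (lshift m2 i) end.
Definition cr (c : cond m2) : cond (m1 + m2) :=
  match c with CIn i => CIn (rshift m1 i) | CNotIn i => CNotIn (rshift m1 i) end.
Definition ol (o : op m1) : op (m1 + m2) :=
  match o with NoOp => NoOp _ | Ins i => Ins (lshift m2 i) end.
Definition or (o : op m2) : op (m1 + m2) :=
  match o with NoOp => NoOp _ | Ins i => Ins (rshift m1 i) end.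

Definition ST := option (state M1 + state M2)%type.

Definition tl (t : state M1 * Sigma * cond m1 * op m1 * state M1)
  : ST * Sigma * cond (m1+m2) * op (m1+m2) * ST :=
  let '(q, a, c, o, q') := t in (Some (inl q), a, cl c, ol o, Some (inl q')).
Definition tr (t : state M2 * Sigma * cond m2 * op m2 * state M2)
  : ST * Sigma * cond (m1+m2) * op (m1+m2) * ST :=
  let '(q, a, c, o, q') := t in (Some (inr q), a, cr c, or o, Some (inr q')).
Definition tl0 (t : state M1 * Sigma * cond m1 * op m1 * state M1)
  : ST * Sigma * cond (m1+m2) * op (m1+m2) * ST :=
  let '(q, a, c, o, q') := t in (None, a, cl c, ol o, Some (inl q')).
Definition tr0 (t : state M2 * Sigma * cond m2 * op m2 * state M2)
  : ST * Sigma * cond (m1+m2) * op (m1+m2) * ST :=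
  let '(q, a, c, o, q') := t in (None, a, cr c, or o, Some (inr q')).

Definition fin3 (s : ST) : bool :=
  match s with None => @final _ _ M1 (@q0 _ _ M1) || @final _ _ M2 (@q0 _ _ M2)
  | Some (inl q) => @final _ _ M1 q | Some (inr q) => @final _ _ M2 q end.

Definition U : SAFA Sigma D := {|
  state := ST;
  nsets := m1 + m2;
  q0 := None;
  final := fin3;
  delta := map tl (delta M1) ++ map tr (delta M2) ++
           map tl0 (List.filter (fun t => t.1.1.1.1 == @q0 _ _ M1) (delta M1)) ++
           map tr0 (List.filter (fun t => t.1.1.1.1 == @q0 _ _ M2) (delta M2)) |}.

Local Notation U3 := U.

Lemma holdsL c (S3 : 'I_(m1+m2) -> seq D) (S1 : 'I_m1 -> seq D) d :
  (forall i, S3 (lshift m2 i) = S1 i) ->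
  @holds _ _ U3 (cl c) S3 d = @holds _ _ M1 c S1 d.
Proof. by move=> E; case: c => i /=; rewrite E. Qed.

Lemma holdsR c (S3 : 'I_(m1+m2) -> seq D) (S1 : 'I_m2 -> seq D) d :
  (forall i, S3 (rshift m1 i) = S1 i) ->
  @holds _ _ U3 (cr c) S3 d = @holds _ _ M2 c S1 d.
Proof. by move=> E; case: c => i /=; rewrite E. Qed.

Lemma opL o (S3 : 'I_(m1+m2) -> seq D) (S1 : 'I_m1 -> seq D) d :
  (forall i, S3 (lshift m2 i) = S1 i) ->
  forall i, @apply_op _ _ U3 (ol o) S3 d (lshift m2 i) = @apply_op _ _ M1 o S1 d i.
Proof. by move=> E; case: o => [|j] i /=; rewrite ?eq_lshift E. Qed.

Lemma opR o (S3 : 'I_(m1+m2) -> seq D) (S1 : 'I_m2 -> seq D) d :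
  (forall i, S3 (rshift m1 i) = S1 i) ->
  forall i, @apply_op _ _ U3 (or o) S3 d (rshift m1 i) = @apply_op _ _ M2 o S1 d i.
Proof. by move=> E; case: o => [|j] i /=; rewrite ?eq_rshift E. Qed.

Lemma fwdL w : forall (q1 : state M1) S1 S3,
  (forall i, S3 (lshift m2 i) = S1 i) ->
  @acc_from _ _ M1 (q1, S1) w -> @acc_from _ _ U3 (Some (inl q1), S3) w.
Proof.
elim: w => [|ad w IH] q1 S1 S3 E //=.
move=> [[q1' S1'] [[q' [al [o [Hin [Hh [/= e1 e2]]]]] Hacc]]]; subst.
exists (Some (inl q'), @apply_op _ _ U3 (ol o) S3 ad.2); split; last first.
  by apply: IH Hacc => i; exact: opL.
exists (Some (inl q')), (cl al), (ol o); split.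
  apply List.in_or_app; left.
  by have := List.in_map tl _ _ Hin.
by rewrite (holdsL al _ _ ad.2 E).
Qed.

Lemma fwdR w : forall (q1 : state M2) S1 S3,
  (forall i, S3 (rshift m1 i) = S1 i) ->
  @acc_from _ _ M2 (q1, S1) w -> @acc_from _ _ U3 (Some (inr q1), S3) w.
Proof.
elim: w => [|ad w IH] q1 S1 S3 E //=.
move=> [[q1' S1'] [[q' [al [o [Hin [Hh [/= e1 e2]]]]] Hacc]]]; subst.
exists (Some (inr q'), @apply_op _ _ U3 (or o) S3 ad.2); split; last first.
  by apply: IH Hacc => i; exact: opR.
exists (Some (inr q')), (cr al), (or o); split.
  apply List.in_or_app; right; apply List.in_or_app; left.
  by have := List.in_map tr _ _ Hin.
by rewrite (holdsR al _ _ ad.2 E).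
Qed.

Lemma bwdL w : forall (q1 : state M1) S1 S3,
  (forall i, S3 (lshift m2 i) = S1 i) ->
  @acc_from _ _ U3 (Some (inl q1), S3) w -> @acc_from _ _ M1 (q1, S1) w.
Proof.
elim: w => [|ad w IH] q1 S1 S3 E //=.
move=> [[q3' S3'] [[q' [al [o [Hin [Hh [/= e1 e2]]]]] Hacc]]]; subst.
apply List.in_app_or in Hin; destruct Hin as [H|Hin];
  [| apply List.in_app_or in Hin; destruct Hin as [H|Hin];
     [| apply List.in_app_or in Hin; destruct Hin as [H|H]]];
  apply List.in_map_iff in H; destruct H as [[[[[p a] c] o'] p'] [Et Ht]];
  simpl in Et; try discriminate.
case: Et => Ep Ea Ec Eo Eq'; subst.
exists (p', @apply_op _ _ M1 o' S1 ad.2); split; last first.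
  by apply: IH Hacc => i; exact: opL.
exists p', c, o'; split; first by [].
by rewrite -(holdsL c _ _ ad.2 E).
Qed.

Lemma bwdR w : forall (q1 : state M2) S1 S3,
  (forall i, S3 (rshift m1 i) = S1 i) ->
  @acc_from _ _ U3 (Some (inr q1), S3) w -> @acc_from _ _ M2 (q1, S1) w.
Proof.
elim: w => [|ad w IH] q1 S1 S3 E //=.
move=> [[q3' S3'] [[q' [al [o [Hin [Hh [/= e1 e2]]]]] Hacc]]]; subst.
apply List.in_app_or in Hin; destruct Hin as [H|Hin];
  [| apply List.in_app_or in Hin; destruct Hin as [H|Hin];
     [| apply List.in_app_or in Hin; destruct Hin as [H|H]]];
  apply List.in_map_iff in H; destruct H as [[[[[p a] c] o'] p'] [Et Ht]];
  simpl in Et; try discriminate.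
case: Et => Ep Ea Ec Eo Eq'; subst.
exists (p', @apply_op _ _ M2 o' S1 ad.2); split; last first.
  by apply: IH Hacc => i; exact: opR.
exists p', c, o'; split; first by [].
by rewrite -(holdsR c _ _ ad.2 E).
Qed.

End U.

Theorem lemma5 (Sigma : finType) (D : countType) (HD : countably_infinite D)
  (M1 M2 : SAFA Sigma D) :
  exists M3 : SAFA Sigma D,
    forall w : seq (Sigma * D), lang M3 w <-> (lang M1 w \/ lang M2 w).
Proof.
exists (U _ _ M1 M2) => [[|ad w]].
  rewrite /lang /=; split; first by case/orP; [left|right].
  by case=> H; apply/orP; [left|right].
rewrite /lang /=; split.
  move=> [[q3' S3'] [[q' [al [o [Hin [Hh [/= e1 e2]]]]] Hacc]]]; subst.
  apply List.in_app_or in Hin; destruct Hin as [H|Hin];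
  [| apply List.in_app_or in Hin; destruct Hin as [H|Hin];
     [| apply List.in_app_or in Hin; destruct Hin as [H|H]]];
  apply List.in_map_iff in H; destruct H as [[[[[p a] c] o'] p'] [Et Ht]];
  simpl in Et; try discriminate;
  apply List.filter_In in Ht; destruct Ht as [Ht Hp]; simpl in Hp;
  move/eqP: Hp => Hp; subst; case: Et => Ea Ec Eo Eq'; subst.
  - left; exists (p', apply_op o' (fun _ => [::]) ad.2); split.
      exists p', c, o'; split; first by [].
      by rewrite -(holdsL _ _ M1 M2 c (fun _ => [::]) (fun _ => [::]) ad.2).
    by apply: bwdL Hacc => i; exact: opL.
  - right; exists (p', apply_op o' (fun _ => [::]) ad.2); split.
      exists p', c, o'; split; first by [].
      by rewrite -(holdsR _ _ M1 M2 c (fun _ => [::]) (fun _ => [::]) ad.2).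
    by apply: bwdR Hacc => i; exact: opR.
case.
  move=> [[q1' S1'] [[q' [al [o [Hin [Hh [/= e1 e2]]]]] Hacc]]]; subst.
  exists (Some (inl q'), @apply_op _ _ (U _ _ M1 M2) (ol _ _ M1 M2 o) (fun _ => [::]) ad.2); split; last first.
    by apply: fwdL Hacc => i; exact: opL.
  exists (Some (inl q')), (cl _ _ M1 M2 al), (ol _ _ M1 M2 o); split; last by rewrite (holdsL _ _ M1 M2 al _ (fun _ => [::]) ad.2).
  apply List.in_or_app; right; apply List.in_or_app; right; apply List.in_or_app; left.
  have := List.in_map (@tl0 _ _ M1 M2) _ _ (proj2 (List.filter_In (fun t => t.1.1.1.1 == @q0 _ _ M1) _ _) (conj Hin (eqxx _))).
  by [].
move=> [[q1' S1'] [[q' [al [o [Hin [Hh [/= e1 e2]]]]] Hacc]]]; subst.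
exists (Some (inr q'), @apply_op _ _ (U _ _ M1 M2) (or _ _ M1 M2 o) (fun _ => [::]) ad.2); split; last first.
  by apply: fwdR Hacc => i; exact: opR.
exists (Some (inr q')), (cr _ _ M1 M2 al), (or _ _ M1 M2 o); split; last by rewrite (holdsR _ _ M1 M2 al _ (fun _ => [::]) ad.2).
apply List.in_or_app; right; apply List.in_or_app; right; apply List.in_or_app; right.
have := List.in_map (@tr0 _ _ M1 M2) _ _ (proj2 (List.filter_In (fun t => t.1.1.1.1 == @q0 _ _ M2) _ _) (conj Hin (eqxx _))).
by [].
Qed.
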